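(* Let $\Omega$ be a state space with finitely many extreme points and positive cone $V_+$. If a linear map $J:V\to V$ is strictly positive with respect to an inner product $(\cdot,\cdot)$ on $V$ and satisfies $J(V_+)=V_+$, then for each extreme point $\omega^{\mathrm{ext}}$ of $\Omega$ there exists $\mu(\omega^{\mathrm{ext}})>0$ such that $J(\omega^{\mathrm{ext}})=\mu(\omega^{\mathrm{ext}})\omega^{\mathrm{ext}}$.
   Context: $V=\mathbb R^{N+1}$. A state space $\Omega\subset V$ is a compact convex set with $\mathrm{span}(\Omega)=V$ and $0\notin\mathrm{aff}(\Omega)$; $V_+=\{\lambda\omega:\lambda\ge0,\omega\in\Omega\}$. A linear map $J$ is strictly positive with respect to $(\cdot,\cdot)$ if $(x,Jy)=(Jx,y)$ for all $x,y$ and $(x,Jx)>0$ for all nonzero $x$. *)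

(* Defs.v *)
From HB Require Import structures.
From mathcomp Require Import all_boot all_order all_algebra.
From mathcomp Require Import all_classical all_reals all_analysis.
Set Implicit Arguments. Unset Strict Implicit. Unset Printing Implicit Defensive.
Import Order.TTheory GRing.Theory Num.Theory.
Import numFieldNormedType.Exports.
Local Open Scope classical_set_scope.
Local Open Scope ring_scope.

(* V = R^(N+1), realised as row vectors 'rV[R]_(N.+1); a linear map
   J : V -> V is a matrix acting on the right: x |-> x *m J. *)

Definition convex_set (R : realType) (n : nat) (S : set 'rV[R]_n) : Prop :=
  forall x y t, S x -> S y -> 0 <= t -> t <= 1 -> S (t *: x + (1 - t) *: y).

Definition extreme_point (R : realType) (n : nat) (S : set 'rV[R]_n)
  (w : 'rV[R]_n) : Prop :=
  S w /\ forall x y t, S x -> S y -> 0 < t -> t < 1 ->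
    w = t *: x + (1 - t) *: y -> x = w /\ y = w.

Definition spans_all (R : realType) (n : nat) (S : set 'rV[R]_n) : Prop :=
  forall v : 'rV[R]_n, exists (k : nat) (c : 'I_k -> R) (w : 'I_k -> 'rV[R]_n),
    (forall i, S (w i)) /\ v = \sum_(i < k) c i *: w i.

Definition in_aff (R : realType) (n : nat) (S : set 'rV[R]_n) (v : 'rV[R]_n) : Prop :=
  exists (k : nat) (c : 'I_k -> R) (w : 'I_k -> 'rV[R]_n),
    (forall i, S (w i)) /\ \sum_(i < k) c i = 1 /\ v = \sum_(i < k) c i *: w i.

Definition state_space (R : realType) (N : nat) (Om : set 'rV[R]_N.+1) : Prop :=
  compact Om /\ convex_set Om /\ spans_all Om /\ ~ in_aff Om 0.

Definition pos_cone (R : realType) (n : nat) (Om : set 'rV[R]_n) : set 'rV[R]_n :=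
  [set v | exists lam om, 0 <= lam /\ Om om /\ v = lam *: om].

Definition inner_product (R : realType) (n : nat) (ip : 'rV[R]_n -> 'rV[R]_n -> R) : Prop :=
  (forall a x y z, ip (a *: x + y) z = a * ip x z + ip y z) /\
  (forall x y, ip x y = ip y x) /\
  (forall x, x != 0 -> 0 < ip x x).

Definition strictly_positive (R : realType) (n : nat) (ip : 'rV[R]_n -> 'rV[R]_n -> R)
  (J : 'M[R]_n) : Prop :=
  (forall x y, ip x (y *m J) = ip (x *m J) y) /\
  (forall x, x != 0 -> 0 < ip x (x *m J)).

(* Main.v *)
Require Import Defs.
From HB Require Import structures.
From mathcomp Require Import all_boot all_order all_algebra.
From mathcomp Require Import all_classical all_reals all_analysis.
From mathcomp Require Import zify finmap.
Import Order.TTheory GRing.Theory Num.Theory.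
Import numFieldNormedType.Exports.
Local Open Scope classical_set_scope.
Local Open Scope ring_scope.

Section S.
Variables (R : realType) (N : nat) (Om : set 'rV[R]_N.+1)
  (ip : 'rV[R]_N.+1 -> 'rV[R]_N.+1 -> R) (J : 'M[R]_N.+1).
Hypothesis Hip : inner_product ip.
Hypothesis HJ : strictly_positive ip J.
Hypothesis Haff : ~ in_aff Om 0.

Lemma ip0l z : ip 0 z = 0.
Proof.
case: Hip => H _. have := H 1 0 0 z. rewrite scaler0 addr0 mul1r.
by move=> h; apply: (addrI (ip 0 z)); rewrite addr0 -h.
Qed.

Lemma ip0r z : ip z 0 = 0.
Proof. case: Hip => _ [H _]; by rewrite H ip0l. Qed.

Lemma ipDr a x y z : ip z (a *: x + y) = a * ip z x + ip z y.
Proof. case: Hip => H [Hs _]; by rewrite Hs H (Hs x) (Hs y). Qed.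

Lemma ip_sumr k (c : 'I_k -> R) (v : 'I_k -> 'rV[R]_N.+1) x :
  ip x (\sum_(i < k) c i *: v i) = \sum_(i < k) c i * ip x (v i).
Proof.
apply: (big_rec2 (fun a b => ip x b = a)); first exact: ip0r.
by move=> i y1 y2 _ <-; rewrite ipDr.
Qed.

Lemma posJn n x : x != 0 -> 0 < ip x (x *m J ^+ n).
Proof.
elim: n {-2}n (leqnn n) x => [|m IH] n.
  rewrite leqn0 => /eqP -> x hx; rewrite expr0 mulmx1; by case: Hip => _ [_ ->].
case: n => [|[|n]] hn x hx.
- rewrite expr0 mulmx1; by case: Hip => _ [_ ->].
- rewrite expr1; by case: HJ => _ ->.
have hxJ : x *m J != 0.
  apply/negP => /eqP h0; case: HJ => _ /(_ x hx); by rewrite h0 ip0r ltxx.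
have -> : x *m J ^+ n.+2 = ((x *m J) *m J ^+ n) *m J.
  by rewrite exprS exprSr -!mulmxE !mulmxA.
case: HJ => -> _. by apply: IH => //; apply: ltnW.
Qed.

Lemma injJn n (x y : 'rV[R]_N.+1) : x *m J ^+ n = y *m J ^+ n -> x = y.
Proof.
move=> h; apply/eqP; rewrite -subr_eq0; apply/negPn/negP => hne.
have := posJn n (x - y) hne; by rewrite mulmxBl h subrr ip0r ltxx.
Qed.

Lemma noaff3 (x y z : 'rV[R]_N.+1) (p q r : R) : Om x -> Om y -> Om z ->
  p *: x + q *: y + r *: z = 0 -> p + q + r = 0.
Proof.
move=> hx hy hz he; apply/eqP/negPn/negP => hs; apply: Haff.
exists 3, (fun i : 'I_3 => nth 0 [:: p / (p+q+r); q / (p+q+r); r / (p+q+r)] i),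
  (fun i : 'I_3 => nth 0 [:: x; y; z] i).
split; first by case=> [[|[|[|]]]] //=.
rewrite !big_ord_recl !big_ord0 /=; split.
  by rewrite addr0 -!mulrDl addrA divff.
by rewrite addr0 addrA !(mulrC _ (p+q+r)^-1) -!scalerA -!scalerDr he scaler0.
Qed.

Hypothesis Himg : (fun x => x *m J) @` pos_cone Om = pos_cone Om.

Lemma nzOm x : Om x -> x != 0.
Proof.
move=> hx; apply/negP => /eqP h0.
have := @noaff3 x x x 1 0 0 hx hx hx.
rewrite h0 !scaler0 !addr0 => /(_ erefl) /eqP; by rewrite oner_eq0.
Qed.

Lemma scal1 x y a : Om x -> Om y -> a *: x = y -> a = 1.
Proof.
move=> hx hy h.
have := @noaff3 y x x 1 (- a) 0 hy hx hx.
rewrite scale1r scaleNr h subrr scale0r !addr0 => /(_ erefl) /eqP.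
by rewrite subr_eq0 eq_sym => /eqP.
Qed.

Lemma cone_of x : Om x -> pos_cone Om x.
Proof. by move=> hx; exists 1, x; rewrite scale1r. Qed.

Lemma cone_img v : pos_cone Om v -> exists a, pos_cone Om a /\ a *m J = v.
Proof. by rewrite -{1}Himg => -[a ha <-]; exists a. Qed.

Lemma img_cone v : pos_cone Om v -> pos_cone Om (v *m J).
Proof. by rewrite -{2}Himg => hv; exists v. Qed.

Lemma ray w : extreme_point Om w ->
  exists c e, 0 < c /\ extreme_point Om e /\ w *m J = c *: e.
Proof.
move=> hw; have hwO := hw.1.
have [c [e [hc0 [he hwJ]]]] := img_cone _ (cone_of _ hwO).
have hc : 0 < c.
  rewrite lt_def hc0 andbT; apply/negP => /eqP c0.
  have : w *m J ^+ 1 = 0 *m J ^+ 1 by rewrite expr1 mul0mx hwJ c0 scale0r.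
  move/injJn => w0; by move: (nzOm _ hwO); rewrite w0 eqxx.
exists c, e; split => //; split => //; split => // x y t hx hy ht0 ht1 hexy.
have [a [[al [a' [hal [ha' ea]]]] hax]] := cone_img _ (cone_of _ hx).
have [b [[bl [b' [hbl [hb' eb]]]] hby]] := cone_img _ (cone_of _ hy).
subst a b; rewrite -scalemxAl in hax; rewrite -scalemxAl in hby.
have hal0 : 0 < al.
  rewrite lt_def hal andbT; apply/negP => /eqP a0.
  by move: (nzOm _ hx); rewrite -hax a0 scale0r eqxx.
have hbl0 : 0 < bl.
  rewrite lt_def hbl andbT; apply/negP => /eqP b0.
  by move: (nzOm _ hy); rewrite -hby b0 scale0r eqxx.
have hwe : w = (c * t * al) *: a' + (c * (1 - t) * bl) *: b'.
  apply: (@injJn 1); rewrite expr1 mulmxDl -!scalemxAl hwJ hexy -hax -hby.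
  by rewrite !scalerDr !scalerA.
have hpq : c * t * al + c * (1 - t) * bl = 1.
  have := noaff3 a' b' w (c * t * al) (c * (1 - t) * bl) (-1) ha' hb' hwO.
  rewrite scaleN1r -hwe subrr => /(_ erefl) /eqP; by rewrite subr_eq0 => /eqP.
have hp0 : 0 < c * t * al by rewrite !mulr_gt0.
have hq0 : 0 < c * (1 - t) * bl by rewrite !mulr_gt0 // subr_gt0.
have hp1 : c * t * al < 1 by rewrite -hpq ltrDl.
have [ea eb] := hw.2 a' b' (c * t * al) ha' hb' hp0 hp1
  ltac:(by rewrite -hpq (addrC (c * t * al)) addrK).
subst a' b'; rewrite hwJ scalerA in hax; rewrite hwJ scalerA in hby.
have h1 := scal1 e x (al * c) he hx hax; rewrite h1 scale1r in hax.
have h2 := scal1 e y (bl * c) he hy hby; rewrite h2 scale1r in hby.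
by split.
Qed.

Lemma iterJ w : extreme_point Om w -> forall n,
  exists c e, 0 < c /\ extreme_point Om e /\ w *m J ^+ n = c *: e.
Proof.
move=> hw; elim => [|n [c [e [hc [he h]]]]].
  by exists 1, w; rewrite expr0 mulmx1 scale1r.
have [c' [e' [hc' [he' h']]]] := ray e he.
exists (c * c'), e'; split; first exact: mulr_gt0.
by rewrite exprSr -mulmxE mulmxA h -scalemxAl h' scalerA.
Qed.

Lemma root_step (w : 'rV[R]_N.+1) k rho : (0 < k)%N -> 0 < rho ->
  w *m J ^+ k = rho *: w -> exists mu, 0 < mu /\ w *m J = mu *: w.
Proof.
move=> hk hrho hwk.
set mu := rho `^ (k%:R^-1).
have hmu0 : 0 < mu by apply: powR_gt0.
have hmu : mu ^+ k = rho.
  rewrite /mu -powR_mulrn ?powR_ge0 // -powRrM mulVf ?powRr1 ?ltW //.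
  by rewrite pnatr_eq0 -lt0n.
exists mu; split => //.
apply/eqP; rewrite -subr_eq0; apply/negPn/negP => hx.
set x := w *m J - mu *: w.
set a := fun i : nat => mu ^+ (k - i) *: (w *m J ^+ i).
have hS : \sum_(i < k) mu ^+ (k.-1 - i) *: (x *m J ^+ i) = 0.
  transitivity (\sum_(i < k) (a i.+1 - a (nat_of_ord i))).
    apply: eq_bigr => i _.
    have hi := ltn_ord i.
    rewrite /a /x mulmxBl -scalemxAl.
    have -> : w *m J *m J ^+ i = w *m J ^+ i.+1 by rewrite exprS -mulmxE mulmxA.
    have -> : (k - i = (k.-1 - i).+1)%N by lia.
    have -> : (k - i.+1 = (k.-1 - i))%N by lia.
    by rewrite scalerBr scalerA (exprSr mu).
  rewrite -(@big_mkord _ 0 +%R k (fun _ => true) (fun i => a i.+1 - a i)) telescope_sumr //.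
  by rewrite /a subnn subn0 expr0 scale1r hwk expr0 mulmx1 hmu subrr.
have := ip_sumr k (fun i : 'I_k => mu ^+ (k.-1 - i)) (fun i : 'I_k => x *m J ^+ i) x.
rewrite hS ip0r.
have [k0 ek] : exists k0, k = k0.+1 by exists k.-1; lia.
rewrite ek big_ord_recl => /esym /eqP; apply/negP; rewrite gt_eqF //.
apply: ltr_pwDl.
  by rewrite mulr_gt0 ?exprn_gt0 // posJn.
by apply: sumr_ge0 => i _; rewrite mulr_ge0 ?exprn_ge0 ?ltW // ?posJn.
Qed.
End S.

Theorem lemmaB3 (R : realType) (N : nat) (Om : set 'rV[R]_N.+1)
  (ip : 'rV[R]_N.+1 -> 'rV[R]_N.+1 -> R) (J : 'M[R]_N.+1) :
  state_space Om ->
  finite_set (extreme_point Om) ->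
  inner_product ip ->
  strictly_positive ip J ->
  (fun x => x *m J) @` pos_cone Om = pos_cone Om ->
  forall w, extreme_point Om w ->
    exists mu : R, 0 < mu /\ w *m J = mu *: w.
Proof.
move=> [_ [_ [_ Haff]]] hfin Hip HJ Himg w hw.
have hall := @iterJ _ _ _ _ _ Hip HJ Haff Himg w hw.
have [f hf] := choice hall.
have {hf} [g hg] := choice hf.
have [X hX] := (finite_fsetP.1 hfin).
set s := [seq g n | n <- iota 0 (size (enum_fset X)).+1].
have : ~~ uniq s.
  apply/negP => hu.
  have hsub : {subset s <= enum_fset X}.
    move=> y /mapP [n _ ->]; have [_ [he _]] := hg n.
    by move: he; rewrite hX.
  by have := uniq_leq_size hu hsub; rewrite /s size_map size_iota ltnn.
move/(uniqPn 0) => [i [j [hij hjs heq]]].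
have his : (i < size s)%N by apply: ltn_trans hjs.
move: heq hjs his; rewrite /s size_map size_iota => heq hjs his.
rewrite !(nth_map 0%N) ?size_iota // !nth_iota // !add0n in heq.
have [hci [_ hi]] := hg i.
have [hcj [_ hj]] := hg j.
apply: (@root_step _ _ _ _ Hip HJ w (j - i) (f j / f i)).
- by rewrite subn_gt0.
- by rewrite divr_gt0.
apply: (@injJn _ _ _ _ Hip HJ i).
rewrite -mulmxA mulmxE -exprD subnK ?(ltnW hij) // hj -scalemxAl hi scalerA.
by rewrite divfK ?gt_eqF // heq.
Qed.
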